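(* Let $V$ be a non-zero $\mathbb{F}[t]$-module over a field $\mathbb{F}$. Assume that there is a non-zero submodule $W$ of $V$ such that $V/W$ has a good stratification and $W$ has a stratification satisfying property (PA+). Then $V$ has a good stratification.
   Context: A stratification of a non-zero $\mathbb{F}[t]$-module $M$ is an increasing family $(M_\alpha)_{\alpha\in D}$ of submodules indexed by a well-ordered set $D$ such that each quotient $M_\alpha/\sum_{\beta<\alpha}M_\beta$ is non-zero and monogenous (cyclic), and $M=\sum_{\alpha\in D}M_\alpha$; its dimension sequence is $n_\alpha:=\dim_{\mathbb{F}}(M_\alpha/\sum_{\beta<\alpha}M_\beta)\in\mathbb{N}^*\cup\{+\infty\}$. Property (PA+): $n_\alpha\ge 2$ whenever $\alpha$ is the minimum of $D$ or the successor of some element of $D$. Property (PM): $D$ has no maximum. A stratification is good if it satisfies (PA+) and (PM). *)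

(* Defs.v *)
(* An F[t]-module is an F-vector space V (lmodType over a
   field F) together with a linear endomorphism u (the action of t). *)
From mathcomp Require Import all_boot all_order all_algebra.
From Stdlib Require List.
Set Implicit Arguments. Unset Strict Implicit. Unset Printing Implicit Defensive.
Import GRing.Theory.
Local Open Scope ring_scope.

Section Strat.
Variables (F : fieldType) (V : lmodType F) (u : {linear V -> V}).

Definition pact (p : {poly F}) (a : V) : V :=
  \sum_(i < size p) p`_i *: iter i u a.

Definition submod (S : V -> Prop) : Prop :=
  [/\ S 0, (forall x y, S x -> S y -> S (x + y)),
      (forall (c : F) x, S x -> S (c *: x)) & (forall x, S x -> S (u x))].

Definition ssum (D : Type) (B : V -> Prop) (Ms : D -> V -> Prop)
    (P : D -> Prop) (x : V) : Prop :=
  exists (b : V) (s : seq (D * V)),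
    [/\ B b, List.Forall (fun q => P q.1 /\ Ms q.1 q.2) s
      & x = b + \sum_(q <- s) q.2].

Definition well_order (D : Type) (R : D -> D -> Prop) : Prop :=
  [/\ (forall a, ~ R a a), (forall a b c, R a b -> R b c -> R a c),
      (forall a b, [\/ a = b, R a b | R b a]) & well_founded R].

(* A stratification of the module M/B, where B and M are submodules of V
   with B contained in M.  Submodules of M/B are represented by submodules
   of V lying between B and M (correspondence theorem).  With B = 0 this is
   literally a stratification of the submodule M. *)
Definition is_strat (B M : V -> Prop) (D : Type) (R : D -> D -> Prop)
    (Ms : D -> V -> Prop) : Prop :=
  well_order R /\ inhabited D /\
  (forall a, submod (Ms a)) /\
  (forall a x, B x -> Ms a x) /\ (forall a x, Ms a x -> M x) /\
  (forall a b x, R a b -> Ms a x -> Ms b x) /\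
  (forall a, exists x, Ms a x /\ ~ ssum B Ms (fun b => R b a) x) /\
  (forall a, exists g, Ms a g /\ forall x, Ms a x ->
      exists p y, ssum B Ms (fun b => R b a) y /\ x = pact p g + y) /\
  (forall x, M x <-> ssum B Ms (fun _ => True) x).

Definition dim_ge2 (B : V -> Prop) (D : Type) (R : D -> D -> Prop)
    (Ms : D -> V -> Prop) (a : D) : Prop :=
  exists x1 x2, [/\ Ms a x1, Ms a x2 &
    forall c1 c2 : F, ssum B Ms (fun b => R b a) (c1 *: x1 + c2 *: x2) ->
      c1 = 0 /\ c2 = 0].

Definition is_min (D : Type) (R : D -> D -> Prop) (a : D) : Prop :=
  forall b, ~ R b a.
Definition is_succ_of (D : Type) (R : D -> D -> Prop) (c a : D) : Prop :=
  R c a /\ forall d, ~ (R c d /\ R d a).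

Definition PAplus (B : V -> Prop) (D : Type) (R : D -> D -> Prop)
    (Ms : D -> V -> Prop) : Prop :=
  forall a, (is_min R a \/ exists c, is_succ_of R c a) -> dim_ge2 B R Ms a.

Definition PM (D : Type) (R : D -> D -> Prop) : Prop :=
  forall a, exists b, R a b.

Definition has_PA_strat (B M : V -> Prop) : Prop :=
  exists (D : Type) (R : D -> D -> Prop) (Ms : D -> V -> Prop),
    is_strat B M R Ms /\ PAplus B R Ms.

Definition has_good_strat (B M : V -> Prop) : Prop :=
  exists (D : Type) (R : D -> D -> Prop) (Ms : D -> V -> Prop),
    [/\ is_strat B M R Ms, PAplus B R Ms & PM R].

End Strat.

(* Main.v *)
Require Import Defs.
From mathcomp Require Import all_boot all_order all_algebra.
From Stdlib Require List.
Set Implicit Arguments.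
Import GRing.Theory.
Local Open Scope ring_scope.

Section Aux.
Variables (F : fieldType) (V : lmodType F).

Lemma ssum_ind (D : Type) (B : V -> Prop) (Ms : D -> V -> Prop) (P : D -> Prop)
   (T : V -> Prop) :
  T 0 -> (forall x y, T x -> T y -> T (x + y)) -> (forall b, B b -> T b) ->
  (forall d y, P d -> Ms d y -> T y) -> forall x, ssum B Ms P x -> T x.
Proof.
move=> T0 TD TB TM x [b [s [Bb Hs ->]]].
apply: (TD); first exact: TB.
elim: s Hs => [|q s IH] Hs; first by rewrite big_nil.
case/List.Forall_cons_iff: Hs => [[Pq Mq] Hs'].
rewrite big_cons; apply: TD; [exact: TM Pq Mq | exact: IH].
Qed.

Lemma ssum_add (D : Type) (B : V -> Prop) (Ms : D -> V -> Prop) (P : D -> Prop) :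
  (forall x y, B x -> B y -> B (x + y)) ->
  forall x y, ssum B Ms P x -> ssum B Ms P y -> ssum B Ms P (x + y).
Proof.
move=> BD x y [b1 [s1 [B1 H1 ->]]] [b2 [s2 [B2 H2 ->]]].
exists (b1 + b2), (s1 ++ s2); split; first exact: BD.
  by apply/List.Forall_app; split.
by rewrite big_cat /= addrACA.
Qed.

Lemma ssum_B (D : Type) (B : V -> Prop) (Ms : D -> V -> Prop) (P : D -> Prop) x :
  B x -> ssum B Ms P x.
Proof. by move=> Bx; exists x, [::]; split => //; rewrite big_nil addr0. Qed.

Lemma ssum_M (D : Type) (B : V -> Prop) (Ms : D -> V -> Prop) (P : D -> Prop) d y :
  B 0 -> P d -> Ms d y -> ssum B Ms P y.
Proof.
move=> B0 Pd My; exists 0, [:: (d, y)]; split => //.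
  by constructor; [split | constructor].
by rewrite big_seq1 add0r.
Qed.

Lemma ssum_mono (D D' : Type) (B B' : V -> Prop) (Ms : D -> V -> Prop)
  (Ms' : D' -> V -> Prop) (P : D -> Prop) (P' : D' -> Prop) :
  B' 0 -> (forall x y, B' x -> B' y -> B' (x + y)) ->
  (forall b, B b -> ssum B' Ms' P' b) ->
  (forall d y, P d -> Ms d y -> ssum B' Ms' P' y) ->
  forall x, ssum B Ms P x -> ssum B' Ms' P' x.
Proof.
move=> B0 BD HB HM; apply: ssum_ind => //; first exact: ssum_B.
exact: ssum_add.
Qed.

End Aux.

Definition sumR (D2 D1 : Type) (R2 : D2 -> D2 -> Prop) (R1 : D1 -> D1 -> Prop)
  (x y : D2 + D1) : Prop :=
  match x, y with
  | inl a, inl b => R2 a b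
  | inl _, inr _ => True
  | inr _, inl _ => False
  | inr a, inr b => R1 a b
  end.

Definition sumM (X : Type) (D2 D1 : Type) (M2 : D2 -> X) (M1 : D1 -> X)
  (x : D2 + D1) : X :=
  match x with inl a => M2 a | inr a => M1 a end.

Theorem lemma4 (F : fieldType) (V : lmodType F) (u : {linear V -> V})
    (W : V -> Prop) :
  (exists v : V, v <> 0) ->
  submod u W ->
  (exists w, W w /\ w <> 0) ->
  has_good_strat u W (fun _ => True) ->
  has_PA_strat u (fun x => x = 0) W ->
  has_good_strat u (fun x => x = 0) (fun _ => True).
Proof.
move=> _ Wsub _ [D1 [R1 [M1 [S1 PA1 PM1]]]] [D2 [R2 [M2 [S2 PA2]]]].
case: S1 => [[irr1 tr1 tri1 wf1] [[i1] [sub1 [B1 [_ [mono1 [nz1 [gen1 cov1]]]]]]]].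
case: S2 => [[irr2 tr2 tri2 wf2] [[i2] [sub2 [B2 [W2 [mono2 [nz2 [gen2 cov2]]]]]]]].
case: Wsub => W0 WD _ _.
set R := sumR R2 R1.
set Ms := sumM M2 M1.
have Z0 : (fun x : V => x = 0) 0 by [].
have ZD : forall x y : V, (fun x : V => x = 0) x -> (fun x : V => x = 0) y ->
    (fun x : V => x = 0) (x + y) by move=> x y /= -> ->; rewrite addr0.
have HWT : forall P : D2 + D1 -> Prop, (forall d, P (inl d)) ->
    forall x, W x -> ssum (fun x : V => x = 0) Ms P x.
  move=> P HP x /cov2; apply: ssum_mono => //.
    by move=> b; apply: ssum_B.
  by move=> d y _ hy; apply: (@ssum_M _ _ _ _ _ _ (inl d)).
have Eq_inl : forall a x, ssum (fun x : V => x = 0) Ms (fun d => R d (inl a)) x <->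
    ssum (fun x : V => x = 0) M2 (fun d => R2 d a) x.
  move=> a x; split.
    apply: (ssum_mono Z0 ZD); first by move=> b; apply: ssum_B.
    by case=> d y //= hd hy; apply: (ssum_M _ _ _ (fun d0 => R2 d0 a) _ _ Z0 hd hy).
  apply: (ssum_mono Z0 ZD); first by move=> b; apply: ssum_B.
  by move=> d y hd hy; apply: (@ssum_M _ _ _ _ _ _ (inl d) _ Z0).
have Eq_inr : forall a x, ssum (fun x : V => x = 0) Ms (fun d => R d (inr a)) x <->
    ssum W M1 (fun d => R1 d a) x.
  move=> a x; split.
    apply: (ssum_mono W0 WD); first by move=> b ->; apply: ssum_B.
    case=> d y /= hd hy; first by apply: ssum_B; exact: W2 hy.
    exact: (ssum_M _ _ _ (fun d0 => R1 d0 a) _ _ W0 hd hy).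
  apply: (ssum_mono Z0 ZD); first by apply: HWT.
  by move=> d y hd hy; apply: (@ssum_M _ _ _ _ _ _ (inr d) _ Z0).
have accl : forall a, Acc R (inl a).
  move=> a; induction (wf2 a) as [a _ IH]; apply: Acc_intro; case=> b h.
    exact: IH.
  by [].
have accr : forall a, Acc R (inr a).
  move=> a; induction (wf1 a) as [a _ IH]; apply: Acc_intro; case=> b h.
    exact: accl.
  exact: IH.
exists (D2 + D1)%type, R, Ms; split.
- split; [split|split; [by constructor; exact (inr i1)|]].
  + by case=> a /=; [exact: irr2 | exact: irr1].
  + case=> a; case=> b; case=> c //=; [exact: tr2 | exact: tr1].
  + case=> a; case=> b /=.
    * by case: (tri2 a b) => [->|h|h]; [apply: Or31|apply: Or32|apply: Or33].
    * exact: Or32.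
    * exact: Or33.
    * by case: (tri1 a b) => [->|h|h]; [apply: Or31|apply: Or32|apply: Or33].
  + by case=> a; [exact: accl | exact: accr].
  split; first by case.
  split; first by move=> a x ->; case: a => a /=; [case: (sub2 a) | case: (sub1 a)].
  split; first by [].
  split.
    case=> a; case=> b x //=; first exact: mono2.
      by move=> _ h; apply: B1; exact: W2 h.
    exact: mono1.
  split.
    case=> a.
      have [x [h nh]] := nz2 a; exists x; split => //; move/Eq_inl; exact: nh.
    have [x [h nh]] := nz1 a; exists x; split => //; move/Eq_inr; exact: nh.
  split.
    case=> a.
      have [g [hg H]] := gen2 a; exists g; split => // x hx.
      have [p [y [hy ->]]] := H x hx; exists p, y; split => //; exact/Eq_inl.
    have [g [hg H]] := gen1 a; exists g; split => // x hx.
    have [p [y [hy ->]]] := H x hx; exists p, y; split => //; exact/Eq_inr.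
  move=> x; split=> // _.
  move: (proj1 (cov1 x) I); apply: ssum_mono => //; first exact: HWT.
  by move=> d y _ hy; apply: (@ssum_M _ _ _ _ _ _ (inr d)).
- case=> a H.
    have : dim_ge2 (fun x : V => x = 0) R2 M2 a.
      apply: PA2; case: H => [m|[c [hc hn]]].
        by left => b hb; exact: (m (inl b) hb).
      right; case: c hc hn => c //= hc hn; exists c; split => // d [h1 h2].
      exact: (hn (inl d) (conj h1 h2)).
    move=> [x1 [x2 [h1 h2 h3]]]; exists x1, x2; split => // c1 c2 /Eq_inl; exact: h3.
  have : dim_ge2 W R1 M1 a.
    apply: PA1; case: H => [m|[c [hc hn]]].
      by exfalso; exact: (m (inl i2) I).
    case: c hc hn => c hc hn.
      by left => b hb; exact: (hn (inr b) (conj I hb)).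
    right; exists c; split => // d [h1 h2]; exact: (hn (inr d) (conj h1 h2)).
  move=> [x1 [x2 [h1 h2 h3]]]; exists x1, x2; split => // c1 c2 /Eq_inr; exact: h3.
- case=> a; first by exists (inr i1).
  by have [b hb] := PM1 a; exists (inr b).
Qed.
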